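(* Let $(\mathbf{x}_i,y_i)$, $i=1,\dots,n$, be training samples with $\mathbf{x}_i\in\mathbb{R}^d$ and $y_i\in\{1,2\}$, let $\mathbf{x}^*_{i'}\in\mathbb{R}^d$, $i'=1,\dots,m$, be universum samples, and let $C,C^*>0$, $\Delta\ge 0$. Consider the two-class MU-SVM problem $$\min_{\mathbf{w}_1,\mathbf{w}_2,\boldsymbol\xi,\boldsymbol\zeta}\ \tfrac12(\|\mathbf{w}_1\|_2^2+\|\mathbf{w}_2\|_2^2)+C\sum_{i=1}^n\xi_i+C^*\sum_{i'=1}^m(\zeta_{i'1}+\zeta_{i'2})$$ subject to $(\mathbf{w}_{y_i}-\mathbf{w}_l)^\top\mathbf{x}_i\ge e_{il}-\xi_i$ with $e_{il}=1-\delta_{il}$ for $i=1,\dots,n$, $l=1,2$ (where $\delta_{il}=1$ if $y_i=l$ and $0$ otherwise), and $\big|\mathbf{w}_k^\top\mathbf{x}^*_{i'}-\max_{l=1,2}\mathbf{w}_l^\top\mathbf{x}^*_{i'}\big|\le\Delta+\zeta_{i'k}$, $\zeta_{i'k}\ge 0$ for $i'=1,\dots,m$, $k=1,2$. Then this problem reduces to the binary Universum-SVM (U-SVM) problem with zero bias: any optimal solution satisfies $\mathbf{w}_1=-\mathbf{w}_2$, and, relabeling class 1 as $+1$ and class 2 as $-1$ (labels $\tilde y_i\in\{+1,-1\}$), the vector $\mathbf{w}=\mathbf{w}_1-\mathbf{w}_2$ is an optimal solution of the U-SVM-type problem $$\min_{\mathbf{w},\boldsymbol\xi,\boldsymbol\zeta}\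 \tfrac14\|\mathbf{w}\|_2^2+C\sum_{i=1}^n\xi_i+C^*\sum_{i'=1}^m\zeta_{i'}\quad\text{s.t.}\quad \tilde y_i\,\mathbf{w}^\top\mathbf{x}_i\ge 1-\xi_i,\ \xi_i\ge0;\quad |\mathbf{w}^\top\mathbf{x}^*_{i'}|\le\Delta+\zeta_{i'},\ \zeta_{i'}\ge0,$$ i.e. the binary U-SVM with bias term $b=0$.
   Context: The Universum-SVM (U-SVM) of Weston et al. (2006) for binary labels $\tilde y_i\in\{\pm1\}$ minimizes a weighted sum of $\|\mathbf{w}\|^2$, hinge losses $\xi_i$ on the training constraints $\tilde y_i(\mathbf{w}^\top\mathbf{x}_i+b)\ge 1-\xi_i$, and $\epsilon$-insensitive losses $\zeta_{i'}$ on universum constraints $|\mathbf{w}^\top\mathbf{x}^*_{i'}+b|\le\Delta+\zeta_{i'}$; here $b=0$. *)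

(* Defs.v *)
From HB Require Import structures.
From mathcomp Require Import all_boot all_order all_algebra.
Set Implicit Arguments. Unset Strict Implicit. Unset Printing Implicit Defensive.
Import Order.TTheory GRing.Theory Num.Theory.
Local Open Scope ring_scope.

Section SVM.
Variables (R : realFieldType) (d n m : nat).

Definition dotv (u v : 'rV[R]_d) : R := \sum_(j < d) u 0 j * v 0 j.

Definition sqnorm (u : 'rV[R]_d) : R := dotv u u.

(* Classes {1,2} are encoded as 'I_2: class 1 = ord0, class 2 = ord_max. *)
Variables (x : 'I_n -> 'rV[R]_d) (y : 'I_n -> 'I_2) (xs : 'I_m -> 'rV[R]_d)
          (C Cs Delta : R).

Definition e_il (i : 'I_n) (l : 'I_2) : R := if y i == l then 0 else 1.

Definition musvm_feasible (W : 'I_2 -> 'rV[R]_d) (xi : 'I_n -> R)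
    (zeta : 'I_m -> 'I_2 -> R) : Prop :=
  (forall (i : 'I_n) (l : 'I_2), dotv (W (y i) - W l) (x i) >= e_il i l - xi i) /\
  (forall (i' : 'I_m) (k : 'I_2),
      `| dotv (W k) (xs i') - Num.max (dotv (W ord0) (xs i')) (dotv (W ord_max) (xs i')) |
        <= Delta + zeta i' k /\ 0 <= zeta i' k).

Definition musvm_obj (W : 'I_2 -> 'rV[R]_d) (xi : 'I_n -> R)
    (zeta : 'I_m -> 'I_2 -> R) : R :=
  2^-1 * (sqnorm (W ord0) + sqnorm (W ord_max)) + C * \sum_(i < n) xi i
  + Cs * \sum_(i' < m) (zeta i' ord0 + zeta i' ord_max).

Definition musvm_optimal W xi zeta : Prop :=
  musvm_feasible W xi zeta /\
  forall W' xi' zeta', musvm_feasible W' xi' zeta' ->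
    musvm_obj W xi zeta <= musvm_obj W' xi' zeta'.

Definition ytilde (i : 'I_n) : R := if y i == ord0 then 1 else -1.

Definition usvm_feasible (w : 'rV[R]_d) (xi : 'I_n -> R) (zeta : 'I_m -> R) : Prop :=
  (forall i : 'I_n, ytilde i * dotv w (x i) >= 1 - xi i /\ 0 <= xi i) /\
  (forall i' : 'I_m, `| dotv w (xs i') | <= Delta + zeta i' /\ 0 <= zeta i').

Definition usvm_obj (w : 'rV[R]_d) (xi : 'I_n -> R) (zeta : 'I_m -> R) : R :=
  4^-1 * sqnorm w + C * \sum_(i < n) xi i + Cs * \sum_(i' < m) zeta i'.

Definition usvm_optimal w xi zeta : Prop :=
  usvm_feasible w xi zeta /\
  forall w' xi' zeta', usvm_feasible w' xi' zeta' ->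
    usvm_obj w xi zeta <= usvm_obj w' xi' zeta'.

End SVM.

(* Main.v *)
Require Import Defs.
From HB Require Import structures.
From mathcomp Require Import all_boot all_order all_algebra.
From mathcomp Require Import ring lra.
Import Order.TTheory GRing.Theory Num.Theory.
Local Open Scope ring_scope.

Lemma I2_cases (k : 'I_2) : k = ord0 \/ k = ord_max.
Proof.
case: k => [[|[|k]] Hk]; [left|right|by []]; exact: val_inj.
Qed.

Lemma ord0_max : (ord0 == ord_max :> 'I_2) = false. Proof. by []. Qed.
Lemma ordmax_0 : (ord_max == ord0 :> 'I_2) = false. Proof. by []. Qed.

Lemma dotvBl (R : realFieldType) d (u v w : 'rV[R]_d) :
  dotv (u - v) w = dotv u w - dotv v w.
Proof. rewrite /dotv -sumrB; apply: eq_bigr => j _; rewrite !mxE; ring. Qed.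

Lemma maxB (R : realFieldType) (a b t : R) :
  Num.max (a - t) (b - t) = Num.max a b - t.
Proof.
case: (lerP a b) => h.
  by rewrite !max_r // lerD2r.
by rewrite !max_l // ?lerD2r ltW.
Qed.

Lemma sqnorm_ge0 (R : realFieldType) d (u : 'rV[R]_d) : 0 <= sqnorm u.
Proof. by apply: sumr_ge0 => j _; rewrite -expr2 sqr_ge0. Qed.

Theorem proposition1 (R : realFieldType) (d n m : nat)
    (x : 'I_n -> 'rV[R]_d) (y : 'I_n -> 'I_2) (xs : 'I_m -> 'rV[R]_d)
    (C Cs Delta : R) (hC : 0 < C) (hCs : 0 < Cs) (hDelta : 0 <= Delta)
    (W : 'I_2 -> 'rV[R]_d) (xi : 'I_n -> R) (zeta : 'I_m -> 'I_2 -> R) :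
  musvm_optimal x y xs C Cs Delta W xi zeta ->
  W ord0 = - W ord_max /\
  exists (xi' : 'I_n -> R) (zeta' : 'I_m -> R),
    usvm_optimal x y xs C Cs Delta (W ord0 - W ord_max) xi' zeta'.
Proof.
move=> [[Htr Hun] Hopt].
pose c : 'rV[R]_d := \row_j ((W ord0 0 j + W ord_max 0 j) / 2).
pose Ws := fun k => W k - c.
have feasWs : musvm_feasible x y xs Delta Ws xi zeta.
  split.
    move=> i l; rewrite /Ws opprB addrA subrK; exact: Htr.
  move=> i' k; rewrite /Ws !dotvBl maxB opprB addrA subrK; exact: Hun.
have objWs : musvm_obj C Cs Ws xi zeta = musvm_obj C Cs W xi zeta - sqnorm c.
  rewrite /musvm_obj.
  suff -> : sqnorm (Ws ord0) + sqnorm (Ws ord_max)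
          = sqnorm (W ord0) + sqnorm (W ord_max) - 2 * sqnorm c by lra.
  rewrite /sqnorm /dotv mulr_sumr -!big_split /= -sumrB.
  apply: eq_bigr => j _; rewrite !mxE; field; by rewrite ?pnatr_eq0.
have hc : sqnorm c = 0.
  have := Hopt _ _ _ feasWs; rewrite objWs => h.
  have := @sqnorm_ge0 _ _ c; lra.
have hW : W ord0 = - W ord_max.
  apply/rowP => j; rewrite mxE.
  have := @psumr_eq0P R _ xpredT (fun j => c 0 j * c 0 j)
    (fun j _ => ltac:(by rewrite /= -expr2 sqr_ge0)) hc j isT.
  move=> /eqP; rewrite mulf_eq0 orbb mxE => /eqP h.
  have : W ord0 0 j + W ord_max 0 j = 0.
    lra.
  lra.
split => //.
exists xi, (fun i' => zeta i' ord0 + zeta i' ord_max).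
have feas : usvm_feasible x y xs Delta (W ord0 - W ord_max) xi
    (fun i' => zeta i' ord0 + zeta i' ord_max).
  split.
    move=> i; have h1 := Htr i (y i); have h2 := Htr i ord0; have h3 := Htr i ord_max.
    move: h1 h2 h3; rewrite /ytilde /e_il !eqxx.
    case: (I2_cases (y i)) => -> /=; rewrite ?eqxx ?ord0_max ?ordmax_0 ?dotvBl => h1 h2 h3;
      split; lra.
  move=> i'; have [h1 h1'] := Hun i' ord0; have [h2 h2'] := Hun i' ord_max.
  move: h1 h2; rewrite dotvBl.
  case: (lerP (dotv (W ord0) (xs i')) (dotv (W ord_max) (xs i'))) => hab.
    rewrite !ler_norml => /andP[h1 h3] /andP[h2 h4].
    split; lra.
  rewrite !ler_norml => /andP[h1 h3] /andP[h2 h4].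
  split; lra.
split => // w' xi2 zeta2 [Htr2 Hun2].
pose W' := fun k : 'I_2 => if k == ord0 then \row_j (w' 0 j / 2)
                          else \row_j (- (w' 0 j / 2)).
pose z' := fun (i' : 'I_m) (k : 'I_2) =>
  if k == ord0 then (if dotv w' (xs i') < 0 then zeta2 i' else 0)
  else (if dotv w' (xs i') < 0 then 0 else zeta2 i').
have dW0 : forall v, dotv (W' ord0) v = dotv w' v / 2.
  move=> v; rewrite /W' eqxx /dotv mulr_suml; apply: eq_bigr => j _; rewrite mxE; ring.
have dW1 : forall v, dotv (W' ord_max) v = - (dotv w' v / 2).
  move=> v; rewrite /W' ordmax_0 /dotv mulr_suml -sumrN; apply: eq_bigr => j _; rewrite mxE; ring.
have feas' : musvm_feasible x y xs Delta W' xi2 z'.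
  split.
    move=> i l; have := Htr2 i; rewrite /ytilde /e_il.
    case: (I2_cases (y i)) => ->; case: (I2_cases l) => -> /=;
      rewrite ?eqxx ?ord0_max ?ordmax_0 !dotvBl ?dW0 ?dW1 => -[h1 h2]; lra.
  move=> i' k; rewrite dW0 dW1 /z'.
  have [h1 h2] := Hun2 i'; move: h1; rewrite ler_norml => /andP[h1 h3].
  case: (I2_cases k) => -> /=; rewrite ?eqxx ?ordmax_0 ?dW0 ?dW1;
  case: (ltrP (dotv w' (xs i')) 0) => hw.
  - rewrite max_r; last lra.
    split; [rewrite ler_norml; apply/andP; split|]; lra.
  - rewrite max_l; last lra.
    split; [rewrite ler_norml; apply/andP; split|]; lra.
  - rewrite max_r; last lra.
    split; [rewrite ler_norml; apply/andP; split|]; lra.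
  - rewrite max_l; last lra.
    split; [rewrite ler_norml; apply/andP; split|]; lra.
have := Hopt _ _ _ feas'.
have e1 : musvm_obj C Cs W xi zeta = usvm_obj C Cs (W ord0 - W ord_max) xi
    (fun i' => zeta i' ord0 + zeta i' ord_max).
  rewrite /musvm_obj /usvm_obj.
  suff -> : 2^-1 * (sqnorm (W ord0) + sqnorm (W ord_max))
           = 4^-1 * sqnorm (W ord0 - W ord_max) by [].
  rewrite hW /sqnorm /dotv -big_split !mulr_sumr; apply: eq_bigr => j _; rewrite !mxE.
  rewrite /=.   field; by rewrite ?pnatr_eq0.
have e2 : musvm_obj C Cs W' xi2 z' = usvm_obj C Cs w' xi2 zeta2.
  rewrite /musvm_obj /usvm_obj.
  have -> : \sum_(i' < m) (z' i' ord0 + z' i' ord_max) = \sum_(i' < m) zeta2 i'.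
    apply: eq_bigr => i' _; rewrite /z' eqxx ordmax_0.
    by case: (dotv w' (xs i') < 0); rewrite ?addr0 ?add0r.
  suff -> : 2^-1 * (sqnorm (W' ord0) + sqnorm (W' ord_max))
           = 4^-1 * sqnorm w' by [].
  rewrite /W' eqxx ordmax_0 /sqnorm /dotv -big_split !mulr_sumr; apply: eq_bigr => j _; rewrite !mxE.
  rewrite /=; field; by rewrite ?pnatr_eq0.
by rewrite e1 e2.
Qed.
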